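(* Let $\mathbf U,\mathbf V,\mathbf W\in\mathbb K^p$, and let $U=\mathrm{val}(\mathbf U)$, $V=\mathrm{val}(\mathbf V)$, $W=\mathrm{val}(\mathbf W)$. Suppose $\max_{i\in[p]}U_i<\max_{i\in[p]}V_i<\max_{i\in[p]}W_i$ and the sets $\arg\max_{i\in[p]}V_i$ and $\arg\max_{i\in[p]}W_i$ are disjoint. Then $\lim_{t\to+\infty}\angle\,\mathbf U(t)\mathbf V(t)\mathbf W(t)=\pi/2$.
   Context: $\mathbb K$ is the real closed field of germs at $+\infty$ of real functions definable in $\bar{\mathbb R}^{\mathbb R}$, the ordered real field expanded by the power functions $t\mapsto t^r$ ($r\in\mathbb R$). Elements are identified with representative functions. $\mathrm{val}(\mathbf f)=\lim_{t\to\infty}\log|\mathbf f(t)|/\log t\in\mathbb R\cup\{-\infty\}$, applied entrywise. For points $U\ne V$, $V\ne W$ of $\mathbb R^p$, $\angle UVW\in[0,\pi]$ is the angle between the vectors $V-U$ and $W-V$, with $\cos\angle UVW=\langle V-U,W-V\rangle/(\|V-U\|\|W-V\|)$. *)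

(* Defs.v *)
From Stdlib Require Import Reals.
Open Scope R_scope.

(* Power function t^r, with the usual convention t^r := 0 for t <= 0. *)
Definition rpow (r t : R) : R := if Rlt_dec 0 t then Rpower t r else 0.

Inductive term : Type :=
| TVar : nat -> term
| TConst : R -> term
| TAdd : term -> term -> term
| TMul : term -> term -> term
| TNeg : term -> term
| TPow : R -> term -> term.

Inductive formula : Type :=
| FEq : term -> term -> formula
| FLt : term -> term -> formula
| FNot : formula -> formula
| FAnd : formula -> formula -> formula
| FOr : formula -> formula -> formula
| FEx : nat -> formula -> formula
| FAll : nat -> formula -> formula.

Definition env := nat -> R.
Definition upd (e : env) (n : nat) (x : R) : env :=
  fun m => if Nat.eqb m n then x else e m.

Fixpoint teval (e : env) (s : term) : R :=
  match s with
  | TVar n => e n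
  | TConst c => c
  | TAdd a b => teval e a + teval e b
  | TMul a b => teval e a * teval e b
  | TNeg a => - teval e a
  | TPow r a => rpow r (teval e a)
  end.

Fixpoint holds (e : env) (phi : formula) : Prop :=
  match phi with
  | FEq a b => teval e a = teval e b
  | FLt a b => teval e a < teval e b
  | FNot f => ~ holds e f
  | FAnd f g => holds e f /\ holds e g
  | FOr f g => holds e f \/ holds e g
  | FEx n f => exists x, holds (upd e n x) f
  | FAll n f => forall x, holds (upd e n x) f
  end.

Definition definable_fun (f : R -> R) : Prop :=
  exists phi : formula, forall (e : env) (x y : R),
    holds (upd (upd e 0 x) 1 y) phi <-> y = f x.

(* Elements of K (germs at +oo of definable functions) are represented by
   definable functions R -> R (any germ has a total definable representative,
   e.g. extend by 0); all statements below only concern behaviour at +oo. *)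
Definition inK (f : R -> R) : Prop := definable_fun f.

(** * Extended reals  R U {-oo}, with None = -oo *)
Definition ereal := option R.
Definition elt (x y : ereal) : Prop :=
  match x, y with
  | _, None => False
  | None, Some _ => True
  | Some a, Some b => a < b
  end.
Definition emax (x y : ereal) : ereal :=
  match x, y with
  | None, _ => y
  | _, None => x
  | Some a, Some b => Some (Rmax a b)
  end.
Fixpoint emax_idx (p : nat) (x : nat -> ereal) : ereal :=
  match p with
  | O => None
  | S q => emax (emax_idx q x) (x q)
  end.
Definition in_argmax (p : nat) (x : nat -> ereal) (i : nat) : Prop :=
  (i < p)%nat /\ x i = emax_idx p x.

(** * val(f) = lim_{t->+oo} log|f(t)| / log t  in R U {-oo}  (log 0 = -oo) *)
Definition has_val (f : R -> R) (v : ereal) : Prop :=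
  match v with
  | Some a => forall eps, eps > 0 -> exists T, forall t, t > T ->
                f t <> 0 /\ Rabs (ln (Rabs (f t)) / ln t - a) < eps
  | None => forall M, exists T, forall t, t > T ->
                f t = 0 \/ ln (Rabs (f t)) / ln t < M
  end.

Fixpoint sumR (p : nat) (g : nat -> R) : R :=
  match p with O => 0 | S q => sumR q g + g q end.
Definition inner (p : nat) (x y : nat -> R) : R := sumR p (fun i => x i * y i).
Definition norm (p : nat) (x : nat -> R) : R := sqrt (inner p x x).
Definition vsub (x y : nat -> R) : nat -> R := fun i => x i - y i.
Definition vneq (p : nat) (x y : nat -> R) : Prop := exists i, (i < p)%nat /\ x i <> y i.
(* angle UVW: angle between V - U and W - V *)
Definition angle (p : nat) (U V W : nat -> R) : R :=
  acos (inner p (vsub V U) (vsub W V) / (norm p (vsub V U) * norm p (vsub W V))).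

(* Main.v *)
Require Import Defs.
From Stdlib Require Import Reals Lra Lia.
Open Scope R_scope.

Definition P (x t : R) : R := exp (x * ln t).

Lemma P_pos x t : 0 < P x t.
Proof. apply exp_pos. Qed.

Lemma ln_pos t : 1 < t -> 0 < ln t.
Proof. intro; rewrite <- ln_1; apply ln_increasing; lra. Qed.

Lemma P_le x y t : 1 < t -> x <= y -> P x t <= P y t.
Proof.
  intros Ht Hxy; unfold P. pose proof (ln_pos t Ht).
  destruct (Req_dec x y) as [->|]; [lra|].
  left; apply exp_increasing. apply Rmult_lt_compat_r; lra.
Qed.

Lemma P_lt x y t : 1 < t -> x < y -> P x t < P y t.
Proof.
  intros Ht Hxy; unfold P. pose proof (ln_pos t Ht).
  apply exp_increasing. apply Rmult_lt_compat_r; lra.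
Qed.

Lemma P_mul x y t : P x t * P y t = P (x + y) t.
Proof. unfold P. rewrite <- exp_plus. f_equal; ring. Qed.

Lemma P_large x K : 0 < x -> exists T, forall t, t > T -> K <= P x t.
Proof.
  intros Hx. exists (Rmax 1 (exp (Rabs K / x))). intros t Ht.
  assert (H1 : 1 < t) by (pose proof (Rmax_l 1 (exp (Rabs K / x))); lra).
  assert (H2 : exp (Rabs K / x) < t) by (pose proof (Rmax_r 1 (exp (Rabs K / x))); lra).
  assert (H3 : Rabs K / x < ln t).
  { rewrite <- (ln_exp (Rabs K / x)). apply ln_increasing; [apply exp_pos|lra]. }
  assert (H4 : Rabs K < x * ln t).
  { apply (Rmult_lt_compat_l x) in H3; [|lra].
    replace (x * (Rabs K / x)) with (Rabs K) in H3 by (field; lra). lra. }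
  unfold P. pose proof (exp_ineq1_le (x * ln t)). pose proof (Rle_abs K). lra.
Qed.

Lemma ev_le f x m : has_val f x -> elt x (Some m) ->
  exists T, forall t, t > T -> Rabs (f t) <= P m t.
Proof.
  intros Hv Hl. destruct x as [a|]; simpl in *.
  - destruct (Hv (m - a)) as [T HT]; [lra|]. exists (Rmax T 1). intros t Ht.
    assert (t > T) by (pose proof (Rmax_l T 1); lra).
    assert (H1 : 1 < t) by (pose proof (Rmax_r T 1); lra).
    destruct (HT t H) as [Hf Ha]. pose proof (ln_pos t H1).
    apply Rabs_def2 in Ha. destruct Ha as [Ha _].
    assert (ln (Rabs (f t)) < m * ln t).
    { assert (ln (Rabs (f t)) / ln t < m) by lra.
      apply (Rmult_lt_compat_r (ln t)) in H2; [|lra].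
      unfold Rdiv in H2. rewrite Rmult_assoc, Rinv_l in H2; lra. }
    rewrite <- (exp_ln (Rabs (f t))) by (apply Rabs_pos_lt; auto).
    unfold P; left; apply exp_increasing; auto.
  - destruct (Hv m) as [T HT]. exists (Rmax T 1). intros t Ht.
    assert (t > T) by (pose proof (Rmax_l T 1); lra).
    assert (H1 : 1 < t) by (pose proof (Rmax_r T 1); lra).
    pose proof (ln_pos t H1).
    destruct (Req_dec (f t) 0) as [E|E].
    + rewrite E, Rabs_R0. left; apply P_pos.
    + destruct (HT t H) as [E'|Ha]; [contradiction|].
      assert (ln (Rabs (f t)) < m * ln t).
      { apply (Rmult_lt_compat_r (ln t)) in Ha; [|lra].
        unfold Rdiv in Ha. rewrite Rmult_assoc, Rinv_l in Ha; lra. }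
      rewrite <- (exp_ln (Rabs (f t))) by (apply Rabs_pos_lt; auto).
      unfold P; left; apply exp_increasing; auto.
Qed.

Lemma ev_ge f a m : has_val f (Some a) -> m < a ->
  exists T, forall t, t > T -> P m t <= Rabs (f t).
Proof.
  intros Hv Hl. simpl in Hv.
  destruct (Hv (a - m)) as [T HT]; [lra|]. exists (Rmax T 1). intros t Ht.
  assert (t > T) by (pose proof (Rmax_l T 1); lra).
  assert (H1 : 1 < t) by (pose proof (Rmax_r T 1); lra).
  destruct (HT t H) as [Hf Ha]. pose proof (ln_pos t H1).
  apply Rabs_def2 in Ha. destruct Ha as [_ Ha].
  assert (m * ln t < ln (Rabs (f t))).
  { assert (m < ln (Rabs (f t)) / ln t) by lra.
    apply (Rmult_lt_compat_r (ln t)) in H2; [|lra].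
    unfold Rdiv in H2. rewrite Rmult_assoc, Rinv_l in H2; lra. }
  rewrite <- (exp_ln (Rabs (f t))) by (apply Rabs_pos_lt; auto).
  unfold P; left; apply exp_increasing; auto.
Qed.

Lemma ev_fin (p : nat) (Q : nat -> R -> Prop) :
  (forall i, (i < p)%nat -> exists T, forall t, t > T -> Q i t) ->
  exists T, forall t, t > T -> forall i, (i < p)%nat -> Q i t.
Proof.
  induction p as [|p IH]; intros H.
  - exists 0; intros; lia.
  - destruct IH as [T1 H1]. { intros; apply H; lia. }
    destruct (H p) as [T2 H2]; [lia|].
    exists (Rmax T1 T2). intros t Ht i Hi.
    pose proof (Rmax_l T1 T2); pose proof (Rmax_r T1 T2).
    destruct (Nat.eq_dec i p) as [->|].
    + apply H2; lra.
    + apply H1; [lra|lia].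
Qed.

Lemma fin_min (p : nat) (Q : nat -> R -> Prop) :
  (forall i d d', 0 < d' <= d -> Q i d -> Q i d') ->
  (forall i, (i < p)%nat -> exists d, 0 < d /\ Q i d) ->
  exists d, 0 < d /\ forall i, (i < p)%nat -> Q i d.
Proof.
  intros Hm. induction p as [|p IH]; intros H.
  - exists 1; split; [lra|intros; lia].
  - destruct IH as [d1 [Hd1 H1]]. { intros; apply H; lia. }
    destruct (H p) as [d2 [Hd2 H2]]; [lia|].
    exists (Rmin d1 d2). split. { apply Rmin_case; lra. }
    intros i Hi. pose proof (Rmin_l d1 d2); pose proof (Rmin_r d1 d2).
    assert (0 < Rmin d1 d2) by (apply Rmin_case; lra).
    destruct (Nat.eq_dec i p) as [->|].
    + apply (Hm p d2); auto; lra.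
    + apply (Hm i d1); [lra|apply H1; lia].
Qed.

Definition ele (x y : ereal) : Prop :=
  match x, y with
  | None, _ => True
  | Some _, None => False
  | Some a, Some b => a <= b
  end.

Lemma emax_l x y : ele x (emax x y).
Proof. destruct x, y; simpl; auto; try lra. apply Rmax_l. Qed.
Lemma emax_r x y : ele y (emax x y).
Proof. destruct x, y; simpl; auto; try lra. apply Rmax_r. Qed.
Lemma ele_trans x y z : ele x y -> ele y z -> ele x z.
Proof. destruct x, y, z; simpl; auto; try lra; tauto. Qed.

Lemma emax_idx_ge p x i : (i < p)%nat -> ele (x i) (emax_idx p x).
Proof.
  induction p as [|p IH]; intros Hi; [lia|]. simpl.
  destruct (Nat.eq_dec i p) as [->|]. apply emax_r.
  eapply ele_trans; [apply IH; lia|apply emax_l].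
Qed.

Lemma emax_idx_arg p x b : emax_idx p x = Some b -> exists j, (j < p)%nat /\ x j = Some b.
Proof.
  induction p as [|p IH]; simpl; intros H; [discriminate|].
  destruct (emax_idx p x) as [a|] eqn:E; destruct (x p) as [c|] eqn:F; simpl in H.
  - unfold Rmax in H; destruct (Rle_dec a c).
    + exists p; split; [lia|congruence].
    + destruct (IH H) as [j [Hj Hx]].
      exists j; split; [lia|auto].
  - destruct (IH H) as [j [Hj Hx]]; exists j; split; [lia|auto].
  - exists p; split; [lia|congruence].
  - discriminate.
Qed.

Lemma elt_ele x y z : elt x y -> ele y z -> elt x z.
Proof. destruct x, y, z; simpl; auto; try lra; tauto. Qed.
Lemma ele_elt x y z : ele x y -> elt y z -> elt x z.
Proof. destruct x, y, z; simpl; auto; try lra; tauto. Qed.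

Lemma ele_neq x m : ele x (Some m) -> x <> Some m -> elt x (Some m).
Proof. destruct x; simpl; auto. intros H N. destruct H; auto. subst; tauto. Qed.

Lemma elt_gap x m : elt x (Some m) -> exists d, 0 < d /\ elt x (Some (m - d)).
Proof. destruct x as [a|]; simpl; intros H.
  - exists ((m - a)/2); split; lra.
  - exists 1; split; [lra|auto]. Qed.

Lemma elt_mono x m m' : elt x (Some m) -> m <= m' -> elt x (Some m').
Proof. destruct x; simpl; auto; lra. Qed.

Lemma sumR_abs p g K : (forall i, (i < p)%nat -> Rabs (g i) <= K) ->
  Rabs (sumR p g) <= INR p * K.
Proof.
  induction p as [|p IH]; intros H; simpl sumR.
  - rewrite Rabs_R0; simpl INR; lra.
  - rewrite S_INR. eapply Rle_trans; [apply Rabs_triang|].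
    assert (Rabs (sumR p g) <= INR p * K) by (apply IH; intros; apply H; lia).
    assert (Rabs (g p) <= K) by (apply H; lia). lra.
Qed.

Lemma sumR_nonneg p g : (forall i, 0 <= g i) -> 0 <= sumR p g.
Proof. induction p; simpl; intros H; [lra|]. pose proof (H p); pose proof (IHp H); lra. Qed.

Lemma sumR_ge p g j : (forall i, 0 <= g i) -> (j < p)%nat -> g j <= sumR p g.
Proof.
  induction p as [|p IH]; simpl; intros H Hj; [lia|].
  pose proof (sumR_nonneg p g H).
  destruct (Nat.eq_dec j p) as [->|]. pose proof (H p); lra.
  pose proof (IH H ltac:(lia)). pose proof (H p); lra.
Qed.

Lemma norm_ge p x j : (j < p)%nat -> Rabs (x j) <= norm p x.
Proof.
  intros Hj. unfold norm, inner. rewrite <- sqrt_Rsqr_abs.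
  apply sqrt_le_1_alt. unfold Rsqr.
  apply (sumR_ge p (fun i => x i * x i) j); auto.
  intros; apply Rle_0_sqr.
Qed.

Lemma acos_near eps : eps > 0 -> exists eta, eta > 0 /\
  forall x, Rabs x < eta -> Rabs (acos x - PI / 2) < eps.
Proof.
  intros He. set (e := Rmin eps 1).
  assert (He1 : 0 < e) by (unfold e; apply Rmin_case; lra).
  assert (He2 : e <= 1) by apply Rmin_r.
  assert (He3 : e <= eps) by apply Rmin_l.
  pose proof PI2_1.
  assert (Hs : 0 < sin e) by (apply sin_gt_0; lra).
  assert (Hs1 : sin e <= 1) by apply SIN_bound.
  exists (sin e); split; [lra|]. intros x Hx.
  apply Rabs_def2 in Hx. destruct Hx as [Hx1 Hx2].
  rewrite acos_asin by lra.
  pose proof (asin_bound x). pose proof (sin_asin x ltac:(lra)).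
  assert (asin x < e).
  { apply sin_increasing_0; try lra. }
  assert (- e < asin x).
  { apply sin_increasing_0; try lra. rewrite sin_neg. lra. }
  apply Rabs_def1; lra.
Qed.

Lemma final_ineq (I n1 n2 B C Q X K pr eta : R) : 0 < eta -> 0 <= pr ->
  Rabs I <= pr * (4 * Q) -> B / 2 <= n1 -> C / 2 <= n2 -> 0 < B -> 0 < C -> 0 < Q ->
  B * C = Q * X -> K <= X -> K = 16 * (pr + 1) / eta -> Rabs (I / (n1 * n2)) < eta.
Proof.
  intros He Hp HI H1 H2 HB HC HQ HX HK EK.
  assert (HD : B * C / 4 <= n1 * n2).
  { assert (0 <= B/2) by lra. assert (0 <= C/2) by lra.
    replace (B * C / 4) with ((B/2)*(C/2)) by field. apply Rmult_le_compat; lra. }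
  assert (HD0 : 0 < n1 * n2) by (pose proof (Rmult_lt_0_compat B C HB HC); lra).
  assert (HQK : Q * K <= Q * X) by (apply Rmult_le_compat_l; lra).
  assert (eta * (Q * K) = 16 * Q * (pr + 1)) by (rewrite EK; field; lra).
  assert (Hlt : Rabs I < eta * (n1 * n2)).
  { assert (eta * (Q * K) / 4 <= eta * (n1 * n2)).
    { assert (Q * K / 4 <= n1 * n2) by lra.
      apply (Rmult_le_compat_l eta) in H0; lra. }
    lra. }
  unfold Rdiv. rewrite Rabs_mult, Rabs_inv, (Rabs_pos_eq (n1 * n2)) by lra.
  apply (Rmult_lt_reg_r (n1 * n2)); auto.
  rewrite Rmult_assoc, Rinv_l by lra. lra.
Qed.

Lemma ev_and (Q1 Q2 : R -> Prop) :
  (exists T, forall t, t > T -> Q1 t) -> (exists T, forall t, t > T -> Q2 t) ->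
  exists T, forall t, t > T -> Q1 t /\ Q2 t.
Proof.
  intros [T1 H1] [T2 H2]. exists (Rmax T1 T2). intros t Ht.
  pose proof (Rmax_l T1 T2); pose proof (Rmax_r T1 T2).
  split; [apply H1|apply H2]; lra.
Qed.

Lemma Rabs_sub_le x y : Rabs (x - y) <= Rabs x + Rabs y.
Proof. unfold Rminus. eapply Rle_trans; [apply Rabs_triang|]. rewrite Rabs_Ropp; lra. Qed.

Lemma Rabs_sub_ge x y : Rabs x - Rabs y <= Rabs (x - y).
Proof. apply Rabs_triang_inv. Qed.

Lemma term_bound (u v w A B1 C1 Cd Q : R) : Rabs u <= A -> Rabs v <= B1 -> Rabs w <= C1 ->
  (Rabs v <= A \/ Rabs w <= Cd) -> 0 < A -> A <= B1 -> B1 <= C1 -> B1 <= Cd ->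
  A * C1 = Q -> B1 * Cd = Q -> Rabs ((v - u) * (w - v)) <= 4 * Q.
Proof.
  intros Hu Hv Hw Hor HA H1 H2 H3 E1 E2. rewrite Rabs_mult.
  pose proof (Rabs_sub_le v u); pose proof (Rabs_sub_le w v).
  pose proof (Rabs_pos (v - u)); pose proof (Rabs_pos (w - v)).
  destruct Hor as [Hor|Hor].
  - apply Rle_trans with ((2 * A) * (2 * C1)); [apply Rmult_le_compat; lra|nra].
  - apply Rle_trans with ((2 * B1) * (2 * Cd)); [apply Rmult_le_compat; lra|nra].
Qed.

Theorem mainTheorem16 (p : nat) (U V W : nat -> R -> R) (u v w : nat -> ereal)
  (hUK : forall i, (i < p)%nat -> inK (U i))
  (hVK : forall i, (i < p)%nat -> inK (V i))
  (hWK : forall i, (i < p)%nat -> inK (W i))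
  (hu : forall i, (i < p)%nat -> has_val (U i) (u i))
  (hv : forall i, (i < p)%nat -> has_val (V i) (v i))
  (hw : forall i, (i < p)%nat -> has_val (W i) (w i))
  (hUV : elt (emax_idx p u) (emax_idx p v))
  (hVW : elt (emax_idx p v) (emax_idx p w))
  (hdisj : forall i, ~ (in_argmax p v i /\ in_argmax p w i)) :
  (exists T, forall t, t > T ->
     vneq p (fun i => U i t) (fun i => V i t) /\
     vneq p (fun i => V i t) (fun i => W i t)) /\
  (forall eps, eps > 0 -> exists T, forall t, t > T ->
     Rabs (angle p (fun i => U i t) (fun i => V i t) (fun i => W i t) - PI / 2) < eps).
Proof.
  destruct (emax_idx p v) as [b|] eqn:Ev; [|simpl in hUV; destruct (emax_idx p u); contradiction].
  destruct (emax_idx p w) as [c|] eqn:Ew; [|simpl in hVW; contradiction].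
  simpl in hVW.
  assert (Hu : forall i, (i < p)%nat -> elt (u i) (Some b)).
  { intros i Hi. eapply ele_elt; [apply emax_idx_ge, Hi|exact hUV]. }
  assert (Hvle : forall i, (i < p)%nat -> ele (v i) (Some b)).
  { intros i Hi. rewrite <- Ev. apply emax_idx_ge, Hi. }
  assert (Hwle : forall i, (i < p)%nat -> ele (w i) (Some c)).
  { intros i Hi. rewrite <- Ew. apply emax_idx_ge, Hi. }
  destruct (fin_min p (fun i d => elt (u i) (Some (b - d)) /\
     (elt (v i) (Some (b - d)) \/ elt (w i) (Some (c - d))))) as [d0 [Hd0 HQ]].
  { intros i d d' Hd [H1 H2]. split. eapply elt_mono; [exact H1|lra].
    destruct H2; [left|right]; (eapply elt_mono; [eassumption|lra]). }
  { intros i Hi. destruct (elt_gap _ _ (Hu i Hi)) as [d1 [Hd1 H1]].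
    assert (exists d2, 0 < d2 /\ (elt (v i) (Some (b - d2)) \/ elt (w i) (Some (c - d2))))
      as [d2 [Hd2 H2]].
    { destruct (Classical_Prop.classic (v i = Some b)) as [E|E].
      - assert (w i <> Some c).
        { intro E'. apply (hdisj i). split; split; auto; congruence. }
        destruct (elt_gap _ _ (ele_neq _ _ (Hwle i Hi) H)) as [d2 [? ?]].
        exists d2; split; auto.
      - destruct (elt_gap _ _ (ele_neq _ _ (Hvle i Hi) E)) as [d2 [? ?]].
        exists d2; split; auto. }
    exists (Rmin d1 d2). pose proof (Rmin_l d1 d2); pose proof (Rmin_r d1 d2).
    split. apply Rmin_case; lra.
    split. eapply elt_mono; [exact H1|lra].
    destruct H2; [left|right]; (eapply elt_mono; [eassumption|lra]). }
  set (d := Rmin d0 ((c - b) / 2)).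
  assert (Hd : 0 < d) by (unfold d; apply Rmin_case; lra).
  assert (Hdd0 : d <= d0) by apply Rmin_l.
  assert (Hdcb : d <= (c - b) / 2) by apply Rmin_r.
  set (e := d / 4).
  assert (HQd : forall i, (i < p)%nat -> elt (u i) (Some (b - d)) /\
     (elt (v i) (Some (b - d)) \/ elt (w i) (Some (c - d)))).
  { intros i Hi. destruct (HQ i Hi) as [H1 H2]. split. eapply elt_mono; [exact H1|lra].
    destruct H2; [left|right]; (eapply elt_mono; [eassumption|lra]). }
  destruct (emax_idx_arg p v b Ev) as [j [Hj Hvj]].
  destruct (emax_idx_arg p w c Ew) as [k [Hk Hwk]].
  assert (Efin : exists T, forall t, t > T -> forall i, (i < p)%nat ->
      Rabs (U i t) <= P (b - d) t /\ Rabs (V i t) <= P (b + e) t /\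
        Rabs (W i t) <= P (c + e) t /\
        (Rabs (V i t) <= P (b - d) t \/ Rabs (W i t) <= P (c - d) t)).
  { apply (ev_fin p (fun i t => Rabs (U i t) <= P (b - d) t /\ Rabs (V i t) <= P (b + e) t /\
        Rabs (W i t) <= P (c + e) t /\
        (Rabs (V i t) <= P (b - d) t \/ Rabs (W i t) <= P (c - d) t))).
    intros i Hi. destruct (HQd i Hi) as [H1 H2].
    assert (Hv' : elt (v i) (Some (b + e))) by (eapply ele_elt; [apply Hvle, Hi|simpl; unfold e; lra]).
    assert (Hw' : elt (w i) (Some (c + e))) by (eapply ele_elt; [apply Hwle, Hi|simpl; unfold e; lra]).
    destruct (ev_and _ _ (ev_and _ _ (ev_le _ _ _ (hu i Hi) H1)
        (ev_le _ _ _ (hv i Hi) Hv')) (ev_le _ _ _ (hw i Hi) Hw')) as [T1 HT1].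
    destruct H2 as [H2|H2].
    + destruct (ev_and _ _ (ex_intro _ T1 HT1) (ev_le _ _ _ (hv i Hi) H2)) as [T2 HT2].
      exists T2; intros t Ht; destruct (HT2 t Ht) as [[[? ?] ?] ?]; tauto.
    + destruct (ev_and _ _ (ex_intro _ T1 HT1) (ev_le _ _ _ (hw i Hi) H2)) as [T2 HT2].
      exists T2; intros t Ht; destruct (HT2 t Ht) as [[[? ?] ?] ?]; tauto. }
  assert (Hvj' : has_val (V j) (Some b)) by (rewrite <- Hvj; apply hv, Hj).
  assert (Hwk' : has_val (W k) (Some c)) by (rewrite <- Hwk; apply hw, Hk).
  assert (Key : forall K, exists T, forall t, t > T ->
    1 < t /\
    (forall i, (i < p)%nat -> Rabs (U i t) <= P (b - d) t /\ Rabs (V i t) <= P (b + e) t /\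
        Rabs (W i t) <= P (c + e) t /\
        (Rabs (V i t) <= P (b - d) t \/ Rabs (W i t) <= P (c - d) t)) /\
    P (b - e) t <= Rabs (V j t) /\ P (c - e) t <= Rabs (W k t) /\
    2 <= P (d - e) t /\ K <= P (d / 4) t).
  { intros K.
    destruct (ev_and _ _ (ev_and _ _ (ev_and _ _ (ev_and _ _ Efin
      (ev_ge (V j) b (b - e) Hvj' ltac:(unfold e; lra)))
      (ev_ge (W k) c (c - e) Hwk' ltac:(unfold e; lra)))
      (P_large (d - e) 2 ltac:(unfold e; lra)))
      (P_large (d / 4) K ltac:(lra))) as [T HT].
    exists (Rmax T 1). intros t Ht.
    pose proof (Rmax_l T 1); pose proof (Rmax_r T 1).
    destruct (HT t ltac:(lra)) as [[[[? ?] ?] ?] ?]. repeat split; try tauto; try lra;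
      apply H1; auto. }
  assert (Hbe : b + e <= c - d) by (unfold e; lra).
  split.
  - destruct (Key 0) as [T HT]. exists T. intros t Ht.
    destruct (HT t Ht) as [H1 [Hb [Hvj0 [Hwk0 [H2 _]]]]].
    destruct (Hb j Hj) as [Uj _]. destruct (Hb k Hk) as [_ [Vk _]].
    assert (R1 : P (b - e) t = P (d - e) t * P (b - d) t) by (rewrite P_mul; f_equal; ring).
    assert (R2 : P (c - e) t = P (d - e) t * P (c - d) t) by (rewrite P_mul; f_equal; ring).
    pose proof (P_pos (b - d) t); pose proof (P_pos (b + e) t).
    pose proof (P_le (b + e) (c - d) t H1 Hbe).
    split; [exists j|exists k]; split; auto; intro E; simpl in E.
    + rewrite E in Uj. nra.
    + rewrite E in Vk. nra.
  - intros eps Heps. destruct (acos_near eps Heps) as [eta [Heta Hacos]].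
    destruct (Key (16 * (INR p + 1) / eta)) as [T HT]. exists T. intros t Ht.
    destruct (HT t Ht) as [H1 [Hb [Hvj0 [Hwk0 [H2 HK]]]]].
    assert (R1 : P (b - e) t = P (d - e) t * P (b - d) t) by (rewrite P_mul; f_equal; ring).
    assert (R2 : P (c - e) t = P (d - e) t * P (c - d) t) by (rewrite P_mul; f_equal; ring).
    pose proof (P_pos (b - d) t); pose proof (P_pos (b + e) t); pose proof (P_pos (c - d) t).
    pose proof (P_le (b + e) (c - d) t H1 Hbe).
    unfold angle. apply Hacos.
    apply final_ineq with (B := P (b - e) t) (C := P (c - e) t) (Q := P (b + c - d + e) t)
      (X := P (d / 4) t) (K := 16 * (INR p + 1) / eta) (pr := INR p); auto.
    + apply pos_INR.
    + apply sumR_abs. intros i Hi. unfold vsub.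
      destruct (Hb i Hi) as [Hu1 [Hv1 [Hw1 Hor]]].
      apply term_bound with (A := P (b - d) t) (B1 := P (b + e) t) (C1 := P (c + e) t)
        (Cd := P (c - d) t); auto.
      * apply P_le; auto; unfold e; lra.
      * apply P_le; auto; lra.
      * rewrite P_mul; f_equal; ring.
      * rewrite P_mul; f_equal; ring.
    + eapply Rle_trans; [|apply (norm_ge p _ j Hj)]. unfold vsub.
      eapply Rle_trans; [|apply Rabs_sub_ge]. destruct (Hb j Hj) as [Uj _]. nra.
    + eapply Rle_trans; [|apply (norm_ge p _ k Hk)]. unfold vsub.
      eapply Rle_trans; [|apply Rabs_sub_ge]. destruct (Hb k Hk) as [_ [Vk _]]. nra.
    + apply P_pos.
    + apply P_pos.
    + apply P_pos.
    + rewrite !P_mul; f_equal; unfold e; field.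
Qed.
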